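(* Let $u_1^\star,\dots,u_r^\star\in\mathbb{R}^n$ be nonzero and pairwise orthogonal, let $T^\star=\sum_{i=1}^r u_i^\star\otimes u_i^\star\otimes u_i^\star$, and let $g:\mathbb{R}^n\to\mathbb{R}$, $g(u)=\|u\otimes u\otimes u-T^\star\|_F^2$. Then every critical point $\hat u$ of $g$ lies in $\mathrm{span}\{u_1^\star,\dots,u_r^\star\}$. Let $s(\hat u)=\#\{i\in[r]:\langle\hat u,u_i^\star\rangle\neq0\}$. Then: (1) if $s(\hat u)=0$, then $\hat u=0$, and $0$ is a third-order saddle point: $\nabla g(0)=0$, $\nabla^2 g(0)=0$ and $\nabla^3 g(0)\neq0$; (2) if $s(\hat u)=1$, then $\hat u=u_i^\star$ for some $i\in[r]$; moreover each $u_i^\star$ is a critical point with $\nabla^2 g(u_i^\star)$ positive definite, hence a strict local minimum; (3) if $s(\hat u)\ge2$, then $\nabla^2 g(\hat u)$ has a negative eigenvalue (strict saddle point).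
   Context: $(a\otimes b\otimes c)_{ijk}=a_ib_jc_k$; $\|\cdot\|_F$ is the entrywise Euclidean (Frobenius) norm of a tensor. A critical point of $g$ is a point where $\nabla g=0$; $\nabla^2 g$ and $\nabla^3 g$ denote the Hessian and third derivative tensor. *)

(* Defs.v *)
From HB Require Import structures.
From mathcomp Require Import all_boot all_order all_algebra.
From mathcomp Require Import all_classical all_reals all_analysis.
Set Implicit Arguments. Unset Strict Implicit. Unset Printing Implicit Defensive.
Import Order.TTheory GRing.Theory Num.Theory.
Import numFieldNormedType.Exports.
Local Open Scope ring_scope.

Section Defs.
Variables (R : realType) (n : nat).

Definition dotv (u v : 'rV[R]_n) : R := \sum_(i < n) u 0 i * v 0 i.

Definition ebasis (i : 'I_n) : 'rV[R]_n := delta_mx 0 i.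

Definition tensor3 := 'I_n -> 'I_n -> 'I_n -> R.

Definition outer3 (a b c : 'rV[R]_n) : tensor3 :=
  fun i j k => a 0 i * b 0 j * c 0 k.

Definition frob2 (T : tensor3) : R :=
  \sum_(i < n) \sum_(j < n) \sum_(k < n) (T i j k) ^+ 2.

Definition Tstar r (us : 'I_r -> 'rV[R]_n) : tensor3 :=
  fun i j k => \sum_(l < r) outer3 (us l) (us l) (us l) i j k.

Definition gobj r (us : 'I_r -> 'rV[R]_n) (u : 'rV[R]_n) : R :=
  frob2 (fun i j k => outer3 u u u i j k - Tstar us i j k).

Definition partial (f : 'rV[R]_n -> R) (i : 'I_n) : 'rV[R]_n -> R :=
  fun x => derive f x (ebasis i).

Definition grad (f : 'rV[R]_n -> R) (u : 'rV[R]_n) : 'rV[R]_n :=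
  \row_i partial f i u.

Definition hessian (f : 'rV[R]_n -> R) (u : 'rV[R]_n) : 'M[R]_n :=
  \matrix_(i, j) partial (partial f j) i u.

Definition deriv3 (f : 'rV[R]_n -> R) (u : 'rV[R]_n) : tensor3 :=
  fun i j k => partial (partial (partial f k) j) i u.

Definition critical (f : 'rV[R]_n -> R) (u : 'rV[R]_n) : Prop := grad f u = 0.

Definition posdef (H : 'M[R]_n) : Prop :=
  forall v : 'rV[R]_n, v != 0 -> 0 < (v *m H *m v^T) 0 0.

Definition strict_local_min (f : 'rV[R]_n -> R) (u : 'rV[R]_n) : Prop :=
  \forall v \near u, v != u -> f u < f v.

Definition in_span r (us : 'I_r -> 'rV[R]_n) (u : 'rV[R]_n) : Prop :=
  exists c : 'I_r -> R, u = \sum_(l < r) c l *: us l.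

Definition supp_count r (us : 'I_r -> 'rV[R]_n) (u : 'rV[R]_n) : nat :=
  #|[set l : 'I_r | dotv u (us l) != 0]|.

End Defs.

(* Main.v *)
Require Import Defs.
From HB Require Import structures.
From mathcomp Require Import all_boot all_order all_algebra.
From mathcomp Require Import all_classical all_reals all_analysis.
From mathcomp Require Import ring lra.
Import Order.TTheory GRing.Theory Num.Theory.
Import numFieldNormedType.Exports.
Local Open Scope ring_scope.

Set Implicit Arguments. Unset Strict Implicit. Unset Printing Implicit Defensive.

Section Alg.
Variables (R : realType) (n : nat).
Local Notation V := 'rV[R]_n.
Local Notation dot := (@dotv R n).

Lemma dotvC (u v : V) : dot u v = dot v u.
Proof. by apply: eq_bigr => i _; rewrite mulrC. Qed.

Lemma dotvDl (u v w : V) : dot (u + v) w = dot u w + dot v w.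
Proof. by rewrite /dotv -big_split; apply: eq_bigr => i _; rewrite mxE mulrDl. Qed.

Lemma dotvZl (a : R) (u w : V) : dot (a *: u) w = a * dot u w.
Proof. by rewrite /dotv mulr_sumr; apply: eq_bigr => i _; rewrite mxE mulrA. Qed.

Lemma dotvNl (u w : V) : dot (- u) w = - dot u w.
Proof. by rewrite -scaleN1r dotvZl mulN1r. Qed.

Lemma dotvBl (u v w : V) : dot (u - v) w = dot u w - dot v w.
Proof. by rewrite dotvDl dotvNl. Qed.

Lemma dotv0l (w : V) : dot 0 w = 0.
Proof. by rewrite /dotv big1 // => i _; rewrite mxE mul0r. Qed.

Lemma dotv_suml r (F : 'I_r -> V) (w : V) :
  dot (\sum_(l < r) F l) w = \sum_(l < r) dot (F l) w.
Proof. exact: (big_morph (fun u => dot u w) (fun u v => dotvDl u v w) (dotv0l w)). Qed.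

Lemma dotvDr (u v w : V) : dot w (u + v) = dot w u + dot w v.
Proof. by rewrite !(dotvC w) dotvDl. Qed.
Lemma dotvZr (a : R) (u w : V) : dot w (a *: u) = a * dot w u.
Proof. by rewrite !(dotvC w) dotvZl. Qed.
Lemma dotvNr (u w : V) : dot w (- u) = - dot w u.
Proof. by rewrite !(dotvC w) dotvNl. Qed.
Lemma dotvBr (u v w : V) : dot w (u - v) = dot w u - dot w v.
Proof. by rewrite !(dotvC w) dotvBl. Qed.
Lemma dotv0r (w : V) : dot w 0 = 0.
Proof. by rewrite dotvC dotv0l. Qed.
Lemma dotv_sumr r (F : 'I_r -> V) (w : V) :
  dot w (\sum_(l < r) F l) = \sum_(l < r) dot w (F l).
Proof. by rewrite dotvC dotv_suml; apply: eq_bigr => l _; rewrite dotvC. Qed.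

Lemma dotv_er (u : V) i : dot u (ebasis R i) = u 0 i.
Proof.
rewrite /dotv (bigD1 i) //= big1 ?addr0; first by rewrite mxE !eqxx mulr1.
by move=> j ji; rewrite mxE (negbTE ji) andbF mulr0.
Qed.
Lemma dotv_el (u : V) i : dot (ebasis R i) u = u 0 i.
Proof. by rewrite dotvC dotv_er. Qed.

Lemma dotvv_ge0 (u : V) : 0 <= dot u u.
Proof. by apply: sumr_ge0 => i _; rewrite -expr2 sqr_ge0. Qed.

Lemma dotvv_eq0 (u : V) : dot u u = 0 -> u = 0.
Proof.
move=> /eqP; rewrite psumr_eq0 => [/allP H|i _]; last by rewrite -expr2 sqr_ge0.
apply/rowP => i; rewrite mxE.
by have /(_ (mem_index_enum i))/implyP/(_ isT)/eqP := H i; move/eqP; rewrite mulf_eq0 orbb => /eqP.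
Qed.

Lemma dotvv_gt0 (u : V) : u != 0 -> 0 < dot u u.
Proof.
move=> u0; rewrite lt_neqAle dotvv_ge0 andbT eq_sym; apply/eqP => /dotvv_eq0.
by move/eqP: u0.
Qed.

Lemma CS (x y : V) : dot x y ^+ 2 <= dot x x * dot y y.
Proof.
have [->|y0] := eqVneq y 0; first by rewrite !dotv0r expr0n mulr0.
have b0 := dotvv_gt0 y0.
set a := dot x y; set b := dot y y.
have := dotvv_ge0 (b *: x - a *: y).
rewrite !(dotvBl, dotvBr, dotvZl, dotvZr) -/a -/b (dotvC y x) -/a => H.
have : 0 <= b * (b * dot x x - a ^+ 2) by move: H; congr (_ <= _); ring.
by rewrite pmulr_rge0 // subr_ge0 mulrC.
Qed.

Lemma trip (a b c : 'I_n -> R) :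
  \sum_(i < n) \sum_(j < n) \sum_(k < n) a i * b j * c k =
  (\sum_(i < n) a i) * (\sum_(j < n) b j) * (\sum_(k < n) c k).
Proof.
rewrite mulr_suml mulr_suml; apply: eq_bigr => i _.
rewrite -mulrA mulr_suml mulr_sumr; apply: eq_bigr => j _.
by rewrite !mulr_sumr; apply: eq_bigr => k _; rewrite !mulrA.
Qed.

Lemma exch4 r (F : 'I_n -> 'I_n -> 'I_n -> 'I_r -> R) :
  \sum_(i < n) \sum_(j < n) \sum_(k < n) \sum_(l < r) F i j k l =
  \sum_(l < r) \sum_(i < n) \sum_(j < n) \sum_(k < n) F i j k l.
Proof.
transitivity (\sum_(i < n) \sum_(j < n) \sum_(l < r) \sum_(k < n) F i j k l).
  by apply: eq_bigr => i _; apply: eq_bigr => j _; rewrite exchange_big.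
transitivity (\sum_(i < n) \sum_(l < r) \sum_(j < n) \sum_(k < n) F i j k l).
  by apply: eq_bigr => i _; rewrite exchange_big.
by rewrite exchange_big.
Qed.

Lemma e3 (x : R) : x ^+ 3 = x * x * x. Proof. by ring. Qed.

Lemma lvl (F G H : 'I_n -> R) :
  \sum_(i < n) (F i - 2 * G i + H i) = \sum_(i < n) F i - 2 * \sum_(i < n) G i + \sum_(i < n) H i.
Proof. by rewrite big_split sumrB mulr_sumr. Qed.

Lemma gobjE r (us : 'I_r -> V) (u : V) :
  gobj us u = dot u u ^+ 3 - 2 * \sum_(l < r) dot u (us l) ^+ 3 + frob2 (Tstar us).
Proof.
rewrite /gobj /frob2.
have E : forall i j k, (outer3 u u u i j k - Tstar us i j k) ^+ 2 =
   (u 0 i * u 0 i) * (u 0 j * u 0 j) * (u 0 k * u 0 k)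
   - 2 * \sum_(l < r) (u 0 i * us l 0 i) * (u 0 j * us l 0 j) * (u 0 k * us l 0 k)
   + Tstar us i j k ^+ 2.
  move=> i j k; rewrite /Tstar /outer3.
  set S := \sum_(l < r) _.
  have -> : \sum_(l < r) (u 0 i * us l 0 i) * (u 0 j * us l 0 j) * (u 0 k * us l 0 k) = u 0 i * u 0 j * u 0 k * S.
    by rewrite /S mulr_sumr; apply: eq_bigr => l _; ring.
  ring.
under eq_bigr => i _ do under eq_bigr => j _ do rewrite (eq_bigr _ (fun k _ => E i j k)) lvl.
under eq_bigr => i _ do rewrite lvl.
rewrite lvl trip exch4 /dotv e3; congr (_ - 2 * _ + _).
by apply: eq_bigr => l _; rewrite trip e3.
Qed.

End Alg.

Section Der.
Variables (R : realType) (n : nat).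
Local Notation V := 'rV[R]_n.
Implicit Types (f g : V -> R) (x v : V).

Lemma isd_ext f g x v (df : R) : f = g -> is_derive x v f df -> is_derive x v g df.
Proof. by move=> ->. Qed.

Lemma isd_val f x v (df : R) : is_derive x v f df -> derive f x v = df.
Proof. by move=> H; rewrite derive_val. Qed.

Lemma isd_cst (c : R) x v : is_derive x v (fun _ : V => c) 0.
Proof. exact: is_derive_cst. Qed.

Lemma isd_add f g x v df dg : is_derive x v f df -> is_derive x v g dg ->
  is_derive x v (fun y => f y + g y) (df + dg).
Proof. by move=> H1 H2; have := is_deriveD H1 H2. Qed.

Lemma isd_sub f g x v df dg : is_derive x v f df -> is_derive x v g dg ->
  is_derive x v (fun y => f y - g y) (df - dg).
Proof. by move=> H1 H2; have := is_deriveB H1 H2. Qed.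

Lemma isd_mul f g x v df dg : is_derive x v f df -> is_derive x v g dg ->
  is_derive x v (fun y => f y * g y) (f x * dg + g x * df).
Proof. by move=> H1 H2; have := is_deriveM H1 H2. Qed.

Lemma isd_scal (k : R) f x v df : is_derive x v f df ->
  is_derive x v (fun y => k * f y) (k * df).
Proof. by move=> H1; apply: isd_ext (is_deriveZ k H1); apply/funext. Qed.

Lemma isd_pow f (m : nat) x v df : is_derive x v f df ->
  is_derive x v (fun y => f y ^+ m) (m%:R * f x ^+ m.-1 * df).
Proof. by move=> H1; apply: isd_ext (is_deriveX m H1); apply/funext => y; rewrite exprfctE. Qed.

Lemma isd_sum r (h : 'I_r -> V -> R) x v (dh : 'I_r -> R) :
  (forall i, is_derive x v (h i) (dh i)) ->
  is_derive x v (fun y => \sum_(i < r) h i y) (\sum_(i < r) dh i).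
Proof.
move=> H; apply: isd_ext (is_derive_sum H).
by apply/funext => y; rewrite fct_sumE.
Qed.

Lemma isd_coord (i : 'I_n) x v : is_derive x v (fun y : V => y 0 i) (v 0 i).
Proof.
apply: DeriveDef; first exact/diff_derivable/differentiable_coord.
rewrite deriveE; last exact: differentiable_coord.
have @f : {linear V -> R}.
  by exists (fun N : V => N 0 i); do 2![eexists]; do ?[constructor];
     rewrite ?mxE// => ? *; rewrite ?mxE//; move=> ?; rewrite !mxE.
rewrite (_ : (fun _ => _) = f) //.
by rewrite diff_lin //; apply: coord_continuous.
Qed.
End Der.

Lemma cube (R : realFieldType) (x y : R) : x ^+ 2 * x = y ^+ 2 * y -> x = y.
Proof.
move=> H.
have : (x - y) * ((2 * x + y) ^+ 2 + 3 * y ^+ 2) = 0.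
  transitivity (4 * (x ^+ 2 * x - y ^+ 2 * y)); first by ring.
  by rewrite H subrr mulr0.
move/eqP; rewrite mulf_eq0 => /orP [/eqP|/eqP E]; first by move/eqP; rewrite subr_eq0 => /eqP.
have h1 := sqr_ge0 (2 * x + y); have h2 := sqr_ge0 y.
have y0 : y ^+ 2 = 0 by lra.
have : (2 * x + y) ^+ 2 = 0 by lra.
move: y0 => /eqP; rewrite sqrf_eq0 => /eqP ->.
move/eqP; rewrite sqrf_eq0 addr0 mulf_eq0 pnatr_eq0 /= => /eqP //.
Qed.

Section Main.
Variables (R : realType) (n r : nat) (us : 'I_r -> 'rV[R]_n).
Local Notation V := 'rV[R]_n.
Local Notation dot := (@dotv R n).
Local Notation e := (@ebasis R n).

Definition Nf (u : V) := dot u u.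
Definition cf l (u : V) := dot u (us l).
Definition C0 := frob2 (Tstar us).
Definition G (u : V) := Nf u ^+ 3 - 2 * \sum_(l < r) cf l u ^+ 3 + C0.

Lemma GE : gobj us = G.
Proof. by apply/funext => u; rewrite gobjE. Qed.

Lemma isd_eq (f : V -> R) x v df df' : is_derive x v f df -> df = df' -> is_derive x v f df'.
Proof. by move=> H <-. Qed.

Lemma isd_dot (w x v : V) : is_derive x v (fun y => dot y w) (dot v w).
Proof.
apply: isd_eq.
  apply: (isd_sum (h := fun i y => y 0 i * w 0 i)) => i.
  by apply: isd_mul; first exact: isd_coord; exact: isd_cst.
by apply: eq_bigr => i _; rewrite mulr0 add0r mulrC.
Qed.

Lemma isd_N x v : is_derive x v Nf (2 * dot x v).
Proof.
apply: isd_eq.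
  apply: (isd_sum (h := fun i y => y 0 i * y 0 i)) => i.
  by apply: isd_mul; exact: isd_coord.
by rewrite /dotv mulr_sumr; apply: eq_bigr => i _; ring.
Qed.

Definition D1 (x v : V) := 6 * Nf x ^+ 2 * dot x v - 6 * \sum_(l < r) cf l x ^+ 2 * dot v (us l).

Lemma isd_G x v : is_derive x v G (D1 x v).
Proof.
apply: isd_eq.
  rewrite /G; apply: isd_add.
  apply: isd_sub; first exact: isd_pow (isd_N x v).
  apply: isd_scal; apply: isd_sum => l; exact: isd_pow (isd_dot _ x v).
rewrite /D1 addr0; congr (_ - _); first by rewrite /=; ring.
rewrite [2 * _]mulr_sumr [6 * _]mulr_sumr; apply: eq_bigr => l _; rewrite /cf /=; ring.
Qed.

Definition P j (u : V) := 6 * Nf u ^+ 2 * u 0 j - 6 * \sum_(l < r) cf l u ^+ 2 * us l 0 j.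

Lemma partialG j : partial G j = P j.
Proof.
apply/funext => u; rewrite /partial (isd_val (isd_G _ _)) /D1 /P dotv_er.
by congr (_ - _ * _); apply: eq_bigr => l _; rewrite dotv_el.
Qed.

Definition D2 (x v : V) j := 24 * Nf x * dot x v * x 0 j + 6 * Nf x ^+ 2 * v 0 j
  - 12 * \sum_(l < r) cf l x * dot v (us l) * us l 0 j.

Lemma isd_P j x v : is_derive x v (P j) (D2 x v j).
Proof.
apply: isd_eq.
  apply: isd_sub.
    apply: isd_mul; last exact: isd_coord.
    by apply: isd_scal; apply: isd_pow (isd_N x v).
  apply: isd_scal; apply: isd_sum => l.
  apply: isd_mul.
  exact: isd_pow (isd_dot _ x v).
rewrite /D2; congr (_ - _); first by rewrite /=; ring.
rewrite [6 * _]mulr_sumr [12 * _]mulr_sumr; apply: eq_bigr => l _; rewrite /cf /=; ring.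
Qed.

Lemma partialP j i : partial (P j) i = fun u => D2 u (e i) j.
Proof. by apply/funext => u; rewrite /partial (isd_val (isd_P _ _ _)). Qed.

Lemma hessE u i j : hessian G u i j = D2 u (e i) j.
Proof. by rewrite /hessian mxE partialG partialP. Qed.

Lemma e_sym i j : (e i) 0 j = (e j) 0 i.
Proof. by rewrite !mxE eq_sym. Qed.

Lemma vH v u : v *m hessian G u = (24 * Nf u * dot u v) *: u + (6 * Nf u ^+ 2) *: v
   - 12 *: \sum_(l < r) (cf l u * dot v (us l)) *: us l.
Proof.
apply/rowP => j; rewrite !mxE summxE.
transitivity (\sum_(i < n) (24 * Nf u * u 0 j * (v 0 i * u 0 i) + 6 * Nf u ^+ 2 * (v 0 i * e j 0 i)
   - 12 * \sum_(l < r) (cf l u * us l 0 j) * (v 0 i * us l 0 i))).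
  apply: eq_bigr => i _; rewrite hessE /D2 dotv_er e_sym.
  rewrite mulrBr mulrDr; congr (_ + _ - _); try ring.
  rewrite mulrCA; congr (12 * _); rewrite mulr_sumr; apply: eq_bigr => l _.
  rewrite dotv_el; ring.
rewrite !big_split /= sumrN -!mulr_sumr exchange_big /=.
have -> : \sum_(i < n) v 0 i * u 0 i = dot u v by rewrite dotvC.
have -> : \sum_(i < n) v 0 i * e j 0 i = v 0 j by rewrite -[RHS](dotv_er v j).
congr (_ - 12 * _); first ring.
apply: eq_bigr => l _; rewrite -mulr_sumr mxE; rewrite /dotv; ring.
Qed.

Lemma gradE u : grad G u = 6 *: (Nf u ^+ 2 *: u - \sum_(l < r) (cf l u ^+ 2) *: us l).
Proof.
apply/rowP => j; rewrite !mxE partialG /P summxE mulrBr mulrA; congr (_ - _).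
  by rewrite expr2 !mulrA.
by congr (_ * _); apply: eq_bigr => l _; rewrite mxE.
Qed.

Lemma quadE (v : V) (H : 'M[R]_n) : (v *m H *m v^T) 0 0 = dot (v *m H) v.
Proof. by rewrite [LHS]mxE /dotv; apply: eq_bigr => j _; rewrite [v^T _ _]mxE. Qed.

Lemma isd_Q0 j k v : is_derive 0 v (fun u => D2 u (e j) k)
   (- 12 * \sum_(l < r) dot v (us l) * us l 0 j * us l 0 k).
Proof.
apply: isd_eq.
  rewrite /D2; apply: isd_sub.
    apply: isd_add.
      apply: isd_mul; last exact: isd_coord.
      apply: isd_mul; last exact: isd_dot.
      by apply: isd_scal; exact: isd_N.
    apply: isd_mul.
    by apply: isd_scal; apply: isd_pow; exact: isd_N.
  apply: isd_scal; apply: isd_sum => l.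
  apply: isd_mul.
  apply: isd_mul.
  exact: isd_dot.
rewrite /= /Nf /cf !dotv0l [(0 : V) 0 k]mxE.
under eq_bigr => l _ do rewrite dotv_el.
rewrite (eq_bigr (fun l => dot v (us l) * us l 0 j * us l 0 k)); first by ring.
by move=> l _; ring.
Qed.

Lemma deriv3E i j k : deriv3 G 0 i j k = - 12 * \sum_(l < r) us l 0 i * us l 0 j * us l 0 k.
Proof.
rewrite /deriv3 partialG partialP /partial (isd_val (isd_Q0 _ _ _)).
by congr (_ * _); apply: eq_bigr => l _; rewrite dotv_el.
Qed.

Lemma collapse (W : zmodType) (F : 'I_r -> W) m :
  (forall l, l != m -> F l = 0) -> \sum_(l < r) F l = F m.
Proof. by move=> H; rewrite (bigD1 m) //= big1 ?addr0 // => l /H. Qed.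

Definition Orth := forall l m, l != m -> dot (us l) (us m) = 0.

Lemma dot_sum_orth (horth : Orth) (a : 'I_r -> R) m :
  dot (\sum_(l < r) a l *: us l) (us m) = a m * dot (us m) (us m).
Proof.
rewrite dotv_suml (@collapse _ _ m) ?dotvZl // => l lm.
by rewrite dotvZl horth // mulr0.
Qed.

Lemma crit_eq u : grad G u = 0 -> Nf u ^+ 2 *: u = \sum_(l < r) cf l u ^+ 2 *: us l.
Proof.
by rewrite gradE => /eqP; rewrite scaler_eq0 pnatr_eq0 /= subr_eq0 => /eqP.
Qed.

Lemma crit_dot (horth : Orth) u m : grad G u = 0 ->
  Nf u ^+ 2 * cf m u = cf m u ^+ 2 * dot (us m) (us m).
Proof.
move/crit_eq => E; have := congr1 (fun x => dot x (us m)) E.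
by rewrite /= dotvZl dot_sum_orth.
Qed.

Lemma span_part u : grad G u = 0 -> in_span us u.
Proof.
move=> /crit_eq E; have [/dotvv_eq0 ->| N0] := eqVneq (Nf u) 0.
  by exists (fun _ => 0); rewrite big1 // => l _; rewrite scale0r.
exists (fun l => (Nf u ^+ 2)^-1 * cf l u ^+ 2).
transitivity ((Nf u ^+ 2)^-1 *: (Nf u ^+ 2 *: u)).
  by rewrite scalerA mulVf ?scale1r // expf_neq0.
by rewrite E scaler_sumr; apply: eq_bigr => l _; rewrite scalerA.
Qed.

Lemma part1 u : grad G u = 0 -> supp_count us u = 0%N -> u = 0.
Proof.
move=> /crit_eq E /eqP; rewrite cards_eq0 => /eqP HA.
have c0 : forall l, cf l u = 0.
  move=> l; have : l \notin [set l | dot u (us l) != 0] by rewrite HA inE.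
  by rewrite inE negbK => /eqP.
move: E; rewrite big1 => [/eqP|l _]; last by rewrite c0 expr2 mul0r scale0r.
rewrite scaler_eq0 expf_eq0 /= => /orP [/eqP/dotvv_eq0|/eqP] //.
Qed.

Lemma grad0 : grad G 0 = 0.
Proof.
rewrite gradE /Nf dotv0l big1 ?expr2 ?mul0r ?scale0r ?subr0 ?scaler0 // => l _.
by rewrite /cf dotv0l expr2 mul0r scale0r.
Qed.

Lemma hess0 : hessian G 0 = 0.
Proof.
apply/matrixP => i j; rewrite hessE /D2 /Nf !mxE dotv0l big1 => [|l _].
  by rewrite !(mulr0, mul0r) expr2 !(mulr0, mul0r) add0r subr0.
by rewrite /cf dotv0l !mul0r.
Qed.

Lemma S2 (u : V) : \sum_(i < n) \sum_(j < n) \sum_(k < n) outer3 u u u i j k * Tstar us i j k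
   = \sum_(l < r) dot u (us l) ^+ 3.
Proof.
transitivity (\sum_(i < n) \sum_(j < n) \sum_(k < n) \sum_(l < r)
   (u 0 i * us l 0 i) * (u 0 j * us l 0 j) * (u 0 k * us l 0 k)).
  do 3! (apply: eq_bigr => ? _); rewrite /Tstar mulr_sumr; apply: eq_bigr => l _.
  by rewrite /outer3; ring.
by rewrite exch4; apply: eq_bigr => l _; rewrite trip e3.
Qed.

Lemma deriv3_0 (hr : (0 < r)%N) (hnz : forall l, us l != 0) (horth : Orth) :
  deriv3 G 0 <> (fun _ _ _ => 0).
Proof.
move=> H.
have T0 : forall i j k, Tstar us i j k = 0.
  move=> i j k; have := congr1 (fun f => f i j k) H; rewrite /= deriv3E => /eqP.
  rewrite mulf_eq0 oppr_eq0 pnatr_eq0 /= => /eqP <-.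
  by apply: eq_bigr => l _; rewrite /outer3.
pose m := Ordinal hr.
have := S2 (us m); rewrite big1 ?(@collapse _ _ m) => [/eqP|l lm|i _].
- rewrite eq_sym expf_eq0 /= => /eqP/dotvv_eq0; exact/eqP/hnz.
- by rewrite horth ?expr0n // eq_sym.
- by rewrite big1 // => j _; rewrite big1 // => k _; rewrite T0 mulr0.
Qed.

Lemma part2 (horth : Orth) u : grad G u = 0 -> supp_count us u = 1%N -> exists l, u = us l.
Proof.
move=> gu /eqP/cards1P [m Hm]; exists m.
have cl : forall l, l != m -> cf l u = 0.
  move=> l lm; have : l \notin [set l | dot u (us l) != 0] by rewrite Hm inE.
  by rewrite inE negbK => /eqP.
have cm : cf m u != 0.
  have : m \in [set l | dot u (us l) != 0] by rewrite Hm inE.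
  by rewrite inE.
have E := crit_eq gu.
rewrite (@collapse _ _ m) in E; last by move=> l /cl ->; rewrite expr2 mul0r scale0r.
have E2 := congr1 (fun x => dot x u) E; rewrite /= !dotvZl (dotvC (us m)) -/(cf m u) -/(Nf u) in E2.
have Nc : Nf u = cf m u by apply: cube; rewrite E2.
have N0 : Nf u ^+ 2 != 0 by rewrite Nc expf_neq0.
transitivity ((Nf u ^+ 2)^-1 *: (Nf u ^+ 2 *: u)).
  by rewrite scalerA mulVf ?scale1r.
by rewrite E -Nc scalerA mulVf ?scale1r.
Qed.

Lemma cf_us (horth : Orth) m l : l != m -> cf l (us m) = 0.
Proof. by move=> lm; rewrite /cf horth // eq_sym. Qed.

Lemma crit_us (horth : Orth) m : grad G (us m) = 0.
Proof.
rewrite gradE (@collapse _ _ m) => [|l lm]; last by rewrite cf_us // expr2 mul0r scale0r.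
by rewrite /cf /Nf subrr scaler0.
Qed.

Lemma posdef_us (hnz : forall l, us l != 0) (horth : Orth) m : posdef (hessian G (us m)).
Proof.
move=> v v0; rewrite quadE vH !(dotvDl, dotvNl, dotvZl) dotv_suml.
rewrite (@collapse _ _ m) => [|l lm]; last by rewrite cf_us // !mul0r scale0r dotv0l.
rewrite dotvZl /cf /Nf (dotvC v (us m)).
have A0 := dotvv_gt0 (hnz m); have V0 := dotvv_gt0 v0.
set A := dot (us m) (us m); set d := dot (us m) v; set b := dot v v.
have d2 := sqr_ge0 d.
have -> : 24 * A * d * d + 6 * A ^+ 2 * b - 12 * (A * d * d) = 12 * A * d ^+ 2 + 6 * A ^+ 2 * b by ring.
have h1 : 0 < A ^+ 2 * b by rewrite mulr_gt0 // exprn_gt0.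
have h2 : 0 <= A * d ^+ 2 by rewrite mulr_ge0 // ltW.
lra.
Qed.

Lemma part3 (hnz : forall l, us l != 0) (horth : Orth) u : grad G u = 0 -> (2 <= supp_count us u)%N ->
  exists2 a : R, a < 0 & eigenvalue (hessian G u) a.
Proof.
move=> gu /card_gt1P [a [b [Ha Hb ab]]].
move: Ha Hb; rewrite !inE -/(cf a u) -/(cf b u) => ca cb.
have Ea := crit_dot horth a gu; have Eb := crit_dot horth b gu.
have Na : cf a u * dot (us a) (us a) = Nf u ^+ 2.
  by apply: (mulfI ca); rewrite mulrA -expr2 -Ea mulrC.
have Nb : cf b u * dot (us b) (us b) = Nf u ^+ 2.
  by apply: (mulfI cb); rewrite mulrA -expr2 -Eb mulrC.
have u0 : u != 0 by apply: contraNneq ca => ->; rewrite /cf dotv0l.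
have N0 := dotvv_gt0 u0.
set v := cf b u *: us a - cf a u *: us b.
have v0 : v != 0.
  apply: contraTneq (hnz a) => v0; apply/negPn.
  have := congr1 (fun x => dot x (us a)) v0.
  rewrite /= dotv0l /v dotvBl !dotvZl (horth b a) 1?eq_sym // mulr0 subr0 => /eqP.
  by rewrite mulf_eq0 (negbTE cb) /= => /eqP/dotvv_eq0 ->.
exists (- 6 * Nf u ^+ 2).
  by rewrite mulNr oppr_lt0 mulr_gt0 // exprn_gt0.
apply/eigenvalueP; exists v => //.
have duv : dot u v = 0.
  by rewrite /v dotvBr !dotvZr -/(cf a u) -/(cf b u) mulrC subrr.
have S : \sum_(l < r) (cf l u * dot v (us l)) *: us l = Nf u ^+ 2 *: v.
  transitivity (\sum_(l < r) (cf b u * (cf l u * dot (us a) (us l))) *: us l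
              - \sum_(l < r) (cf a u * (cf l u * dot (us b) (us l))) *: us l).
    rewrite -sumrB; apply: eq_bigr => l _; rewrite -scalerBl; congr (_ *: _).
    by rewrite /v dotvBl !dotvZl; ring.
  rewrite (@collapse _ _ a) => [|l la]; last by rewrite horth 1?eq_sym // !mulr0 scale0r.
  rewrite (@collapse _ _ b) => [|l lb]; last by rewrite horth 1?eq_sym // !mulr0 scale0r.
  rewrite /v scalerBr !scalerA; congr (_ *: _ - _ *: _).
    by rewrite Na mulrC.
  by rewrite Nb mulrC.
rewrite vH duv S mulr0 scale0r add0r scalerA -scalerBl; congr (_ *: _); ring.
Qed.

Lemma slm_alg (hnz : forall l, us l != 0) (horth : Orth) m u :
  let A := dot (us m) (us m) in
  let M := \sum_(l < r) dot (us l) (us l) in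
  A / 2 < cf m u -> (forall l, l != m -> `|cf l u| < A ^+ 2 / (16 * M)) -> u != us m ->
  G (us m) < G u.
Proof.
move=> A M h1 h2 uw.
have A0 : 0 < A := dotvv_gt0 (hnz m).
have MA : M = A + \sum_(l < r | l != m) dot (us l) (us l) by rewrite /M (bigD1 m).
have M'0 : 0 <= \sum_(l < r | l != m) dot (us l) (us l) by apply: sumr_ge0 => l _; exact: dotvv_ge0.
have M0 : 0 < M by rewrite MA; apply: ltr_wpDr.
set eta := A ^+ 2 / (16 * M).
have eta0 : 0 <= eta by rewrite /eta divr_ge0 // ?mulr_ge0 // ?sqr_ge0 // ltW.
set s := cf m u / A.
have cm : cf m u = s * A by rewrite /s divfK // gt_eqF.
set v' := u - s *: us m.
set q := dot v' v'.
have q0 : 0 <= q := dotvv_ge0 v'.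
have Nq : Nf u = s ^+ 2 * A + q.
  rewrite /q /v' !(dotvBl, dotvBr, dotvZl, dotvZr) -/(cf m u) (dotvC (us m) u) -/(cf m u) cm /Nf.
  rewrite -/A; ring.
have cl : forall l, l != m -> cf l u = dot v' (us l).
  by move=> l lm; rewrite /v' dotvBl dotvZl horth 1?eq_sym // mulr0 subr0.
set X := \sum_(l < r | l != m) cf l u ^+ 3.
have SX : \sum_(l < r) cf l u ^+ 3 = cf m u ^+ 3 + X by rewrite (bigD1 m).
have Xle : X <= eta * (q * M).
  apply: (@le_trans _ _ (\sum_(l < r | l != m) eta * (q * dot (us l) (us l)))).
    apply: ler_sum => l lm.
    have c2 : cf l u ^+ 2 <= q * dot (us l) (us l) by rewrite cl // CS.
    have := h2 l lm => hl.
    have c20 := sqr_ge0 (cf l u).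
    apply: (@le_trans _ _ (`|cf l u| * cf l u ^+ 2)).
      by rewrite (_ : cf l u ^+ 3 = cf l u * cf l u ^+ 2) ?ler_wpM2r ?ler_norm //; ring.
    apply: (@le_trans _ _ (eta * cf l u ^+ 2)); first by rewrite ler_wpM2r // ltW.
    by rewrite ler_wpM2l.
  rewrite -mulr_sumr -mulr_sumr; apply: ler_wpM2l => //; apply: ler_wpM2l => //.
  by rewrite MA lerDr; exact: dotvv_ge0.
have etaM : eta * (q * M) = q * A ^+ 2 / 16.
  by rewrite /eta; field; rewrite gt_eqF.
have Gw : G (us m) = A ^+ 3 - 2 * A ^+ 3 + C0.
  rewrite /G (@collapse _ _ m) => [|l lm]; last by rewrite cf_us // expr0n.
  by [].
have s2 : 1 / 2 < s by rewrite /s ltr_pdivlMr //; lra.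
have s4 : 1 / 16 <= s ^+ 4.
  have s0 : 0 <= s by lra.
  have : (1 / 2) ^+ 4 <= s ^+ 4 by rewrite lerXn2r // ?nnegrE; lra.
  by congr (_ <= _); field.
rewrite Gw /G SX Nq cm.
have q2 : 0 <= 3 * (s ^+ 2 * A) * q ^+ 2 + q ^+ 3.
  have a0 : 0 <= s ^+ 2 * A by rewrite mulr_ge0 ?sqr_ge0 // ltW.
  apply: addr_ge0; last exact: exprn_ge0.
  by apply: mulr_ge0; [apply: mulr_ge0 | exact: sqr_ge0].
have qA : 0 <= q * A ^+ 2 by rewrite mulr_ge0 // sqr_ge0.
have t4 : q * A ^+ 2 / 16 <= q * A ^+ 2 * s ^+ 4 by nra.
have P : 0 < A ^+ 3 * (s ^+ 3 - 1) ^+ 2 + q * A ^+ 2 / 16.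
  have [q0'|] := ltrP 0 q.
    have : 0 < q * A ^+ 2 / 16 by rewrite divr_gt0 // mulr_gt0 // exprn_gt0.
    have : 0 <= A ^+ 3 * (s ^+ 3 - 1) ^+ 2 by rewrite mulr_ge0 ?sqr_ge0 // exprn_ge0 // ltW.
    lra.
  move=> qle; have qe : q = 0 by apply/le_anti; rewrite qle q0.
  rewrite qe mul0r mul0r addr0; apply: mulr_gt0; first exact: exprn_gt0.
  rewrite lt_def sqr_ge0 andbT sqrf_eq0 subr_eq0; apply/negP => /eqP s31.
  have s1 : s = 1 by apply: cube; rewrite -exprSr s31 expr1n mul1r.
  move/dotvv_eq0: qe; rewrite /v' s1 scale1r => /eqP; rewrite subr_eq0 => /eqP uw'.
  by move/eqP: uw.
rewrite -subr_gt0.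
have -> : (s ^+ 2 * A + q) ^+ 3 - 2 * ((s * A) ^+ 3 + X) + C0 - (A ^+ 3 - 2 * A ^+ 3 + C0)
   = A ^+ 3 * (s ^+ 3 - 1) ^+ 2 + 3 * (q * A ^+ 2 * s ^+ 4) + (3 * (s ^+ 2 * A) * q ^+ 2 + q ^+ 3) - 2 * X by ring.
rewrite etaM in Xle; lra.
Qed.

Local Open Scope classical_set_scope.
Lemma cf_cont l (x : V) : (cf l @ x --> cf l x)%classic.
Local Close Scope classical_set_scope.
Proof.
apply: differentiable_continuous.
have -> : cf l = \sum_(i < n) (fun y : V => y 0 i * us l 0 i).
  by apply/funext => y; rewrite fct_sumE.
apply: differentiable_sum => i.
apply: (@differentiableM _ _ (fun y : V => y 0 i) (cst (us l 0 i))).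
  exact: differentiable_coord.
exact: differentiable_cst.
Qed.

Lemma slm (hnz : forall l, us l != 0) (horth : Orth) m : strict_local_min G (us m).
Proof.
rewrite /strict_local_min.
set A := dot (us m) (us m); set M := \sum_(l < r) dot (us l) (us l).
have A0 : 0 < A := dotvv_gt0 (hnz m).
have M0 : 0 < M.
  rewrite /M (bigD1 m) //=; apply: ltr_wpDr => //.
  by apply: sumr_ge0 => l _; exact: dotvv_ge0.
have eta0 : A ^+ 2 / (16 * M) > 0 by rewrite divr_gt0 // ?mulr_gt0 // exprn_gt0.
near=> v => vw.
apply: slm_alg => //.
  near: v; apply: (cvgr_gt _ (cf_cont (l:=m) (x:=us m))).
  by rewrite /cf -/A; lra.
near: v; apply: filter_forall => l.
apply: filterS (cvgr_distC_lt _ _ (cf_cont (l:=l) (x:=us m)) _ eta0) => y + lm.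
by rewrite cf_us // subr0.
Unshelve. all: by end_near.
Qed.

End Main.

Unset Implicit Arguments.

Theorem theorem2 (R : realType) (n r : nat) (us : 'I_r -> 'rV[R]_n)
  (hr : (0 < r)%N)
  (hnz : forall l, us l != 0)
  (horth : forall l m, l != m -> dotv (us l) (us m) = 0) :
  let g := gobj us in
  (forall u, critical g u -> in_span us u) /\
  [/\ (* (1) *)
      (forall u, critical g u -> supp_count us u = 0%N -> u = 0),
      [/\ grad g 0 = 0, hessian g 0 = 0 & deriv3 g 0 <> (fun _ _ _ => 0)],
      (* (2) *)
      (forall u, critical g u -> supp_count us u = 1%N -> exists l, u = us l),
      (forall l, [/\ critical g (us l), posdef (hessian g (us l))
                   & strict_local_min g (us l)]) &
      (* (3) *)
      (forall u, critical g u -> (2 <= supp_count us u)%N ->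
         exists2 a : R, a < 0 & eigenvalue (hessian g u) a)].
Proof.
move=> g; rewrite /g GE /critical.
split; first by move=> u /span_part.
split.
- move=> u cu s0. apply: (part1 cu s0).
- by split; [exact: grad0 | exact: hess0 | exact: deriv3_0].
- by move=> u cu s1; exact: part2.
- by move=> l; split; [exact: crit_us | exact: posdef_us | exact: slm].
- by move=> u cu s2; exact: part3.
Qed.
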